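(* For GP-EI with BPMI and any $t\in\mathbb{N}$, when $E^r(t)$ holds, $$r_t\le\big(c_\mu(t)+\phi(0)+\beta_t^{1/2}\big)\sigma_{t-1}(\mathbf{x}_t)+c_\alpha\beta_t^{1/2}\sigma_{t-1}([\mathbf{x}^*]_t)+\frac{1}{t^2},$$ where $c_\mu(t)=\log^{1/2}\!\big(\frac{t-1+\sigma^2}{2\pi\phi^2(0)\sigma^2}\big)$ and $c_\alpha=1.328$.
   Context: Setting: $d\ge1$, $r>0$, $C\subseteq[0,r]^d$ compact; $k$ positive semidefinite kernel with $k(\mathbf{x},\mathbf{x}')\le1$, $k(\mathbf{x},\mathbf{x})=1$ on $C$. $f$ is a sample path of $GP(0,k)$, Lipschitz with constant $L\ge1/(rd)$ in $\ell_1$-norm; $\mathbf{x}^*\in\arg\min_Cf$. Observations $y_t=f(\mathbf{x}_t)+\epsilon_t$, $\epsilon_t$ i.i.d. $\mathcal{N}(0,\sigma^2)$, $\sigma>0$. Posterior $\mu_t(\mathbf{x})=\mathbf{k}_t(\mathbf{x})^T(\mathbf{K}_t+\sigma^2\mathbf{I})^{-1}\mathbf{y}_{1:t}$, $\sigma_t^2(\mathbf{x})=1-\mathbf{k}_t(\mathbf{x})^T(\mathbf{K}_t+\sigma^2\mathbf{I})^{-1}\mathbf{k}_t(\mathbf{x})$ ($\mathbf{K}_t=[k(\mathbf{x}_i,\mathbf{x}_j)]_{i,j\le t}$, $\mathbf{k}_t(\mathbf{x})=[k(\mathbf{x}_i,\mathbf{x})]_{i\le t}$). BPMI incumbent $\xi_t^+=\mu_t^+=\min_{\mathbf{x}\in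 C}\mu_t(\mathbf{x})$. $EI_t(\mathbf{x})=(\xi_t^+-\mu_t(\mathbf{x}))\Phi(z_t(\mathbf{x}))+\sigma_t(\mathbf{x})\phi(z_t(\mathbf{x}))$, $z_t=(\xi_t^+-\mu_t)/\sigma_t$, $\phi,\Phi$ standard normal pdf/cdf; GP-EI picks $\mathbf{x}_t\in\arg\max_CEI_{t-1}$. $r_t=f(\mathbf{x}_t)-f(\mathbf{x}^* )$. Discretization: $\mathbb{C}_t\subseteq C$ finite, $|\mathbb{C}_t|=(Lrdt^2)^d$, with $\|\mathbf{x}-[\mathbf{x}]_t\|_1\le1/(Lt^2)$ for all $\mathbf{x}\in C$, where $[\mathbf{x}]_t$ is a closest point of $\mathbb{C}_t$ to $\mathbf{x}$. With $\delta\in(0,1)$, $\pi_t=\pi^2t^2/6$, $\beta_t=2\log(8|\mathbb{C}_t|\pi_t/\delta)$. $E^r(t)$ is the event that $|f(\mathbf{x})-\mu_{t-1}(\mathbf{x})|\le\beta_t^{1/2}\sigma_{t-1}(\mathbf{x})$ for all $\mathbf{x}\in\mathbb{C}_t$ and also $|f(\mathbf{x}_t)-\mu_{t-1}(\mathbf{x}_t)|\le\beta_t^{1/2}\sigma_{t-1}(\mathbf{x}_t)$. *)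

(* Defs.v *)
From HB Require Import structures.
From mathcomp Require Import all_boot all_order all_algebra.
From mathcomp Require Import all_classical all_reals all_analysis.
Set Implicit Arguments. Unset Strict Implicit. Unset Printing Implicit Defensive.
Import Order.TTheory GRing.Theory Num.Theory Num.Def.
Import numFieldNormedType.Exports.
Local Open Scope classical_set_scope.
Local Open Scope ring_scope.

Section GPEI.
Context {R : realType} {d : nat}.
Notation pt := 'rV[R]_d.

Definition l1norm (v : pt) : R := \sum_(i < d) `|v ord0 i|.

Definition psd_kernel (k : pt -> pt -> R) : Prop :=
  (forall x y, k x y = k y x) /\
  (forall (n : nat) (z : 'I_n -> pt) (c : 'I_n -> R),
      0 <= \sum_(i < n) \sum_(j < n) c i * c j * k (z i) (z j)).

(* GP posterior after n observations; the i-th observation (i : 'I_n)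
   is taken at X (i+1) with value y (i+1), i.e. data x_1..x_n, y_1..y_n. *)
Definition gram (k : pt -> pt -> R) (X : nat -> pt) (n : nat) : 'M[R]_n :=
  \matrix_(i < n, j < n) k (X i.+1) (X j.+1).
Definition kvec (k : pt -> pt -> R) (X : nat -> pt) (n : nat) (x : pt) : 'cV[R]_n :=
  \col_(i < n) k (X i.+1) x.
Definition yvec (y : nat -> R) (n : nat) : 'cV[R]_n := \col_(i < n) y i.+1.

Definition post_mean (k : pt -> pt -> R) (sigma : R) (X : nat -> pt) (y : nat -> R)
  (n : nat) (x : pt) : R :=
  ((kvec k X n x)^T *m invmx (gram k X n + (sigma ^+ 2)%:M) *m yvec y n) ord0 ord0.

Definition post_var (k : pt -> pt -> R) (sigma : R) (X : nat -> pt)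
  (n : nat) (x : pt) : R :=
  1 - ((kvec k X n x)^T *m invmx (gram k X n + (sigma ^+ 2)%:M) *m kvec k X n x) ord0 ord0.

Definition post_sd k sigma X n x : R := Num.sqrt (post_var k sigma X n x).

Definition phi (z : R) : R := normal_pdf 0 1 z.
Definition Phi (z : R) : R := fine (normal_prob 0 1 `]-oo, z]).

Definition bpmi (C : set pt) (mu : pt -> R) : R := inf [set mu x | x in C].

Definition EI k sigma (C : set pt) X y (n : nat) (x : pt) : R :=
  let xi := bpmi C (post_mean k sigma X y n) in
  let m := post_mean k sigma X y n x in
  let s := post_sd k sigma X n x in
  let z := (xi - m) / s in
  (xi - m) * Phi z + s * phi z.

Definition pi_t (t : nat) : R := pi ^+ 2 * (t%:R) ^+ 2 / 6.
(* beta_t = 2 log(8 |C_t| pi_t / delta), with |C_t| = (L r d t^2)^d *)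
Definition beta_t (L r : R) (delta : R) (t : nat) : R :=
  2 * ln (8 * (L * r * d%:R * (t%:R) ^+ 2) ^+ d * pi_t t / delta).

Definition c_mu (sigma : R) (t : nat) : R :=
  Num.sqrt (ln ((t%:R - 1 + sigma ^+ 2) / (2 * pi * phi 0 ^+ 2 * sigma ^+ 2))).

Definition c_alpha : R := 1328%:R / 1000%:R.

End GPEI.

(* Main.v *)
Require Import Defs.
From HB Require Import structures.
From mathcomp Require Import all_boot all_order all_algebra.
From mathcomp Require Import all_classical all_reals all_analysis.
From mathcomp Require Import ring lra.
Import Order.TTheory GRing.Theory Num.Theory Num.Def.
Import numFieldNormedType.Exports.
Local Open Scope classical_set_scope.
Local Open Scope ring_scope.
Lemma k_abs_le1 (R : realType) d (C : set 'rV[R]_d) k a b : psd_kernel k ->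
  (forall x x', C x -> C x' -> k x x' <= 1) -> (forall x, C x -> k x x = 1) ->
  C a -> C b -> `|k a b| <= 1.
Proof.
move=> [ksym kpsd] kle1 kdiag Ca Cb.
have := kpsd 2 (fun i => if i == ord0 then a else b) (fun _ => 1).
rewrite !big_ord_recr !big_ord0 /= !mul1r !add0r (ksym b a) !kdiag // => H.
rewrite ler_norml kle1 // andbT; lra.
Qed.

Lemma quadE (R : realType) d (k : 'rV[R]_d -> 'rV[R]_d -> R) X n (s : R) (v : 'rV[R]_n) :
  (v *m (gram k X n + s%:M) *m v^T) 0 0 =
  \sum_i \sum_j v 0 i * v 0 j * k (X i.+1) (X j.+1) + s * \sum_i v 0 i ^+ 2.
Proof.
rewrite mulmxDr mulmxDl mxE; congr (_ + _).
  rewrite mxE; under eq_bigr do rewrite mxE big_distrl /=.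
  rewrite exchange_big /=; apply: eq_bigr => i _.
  apply: eq_bigr => j _; rewrite /gram !mxE; ring.
rewrite mul_mx_scalar -scalemxAl mxE mxE; congr (_ * _); apply: eq_bigr => i _.
by rewrite !mxE expr2.
Qed.
Lemma A_unit (R : realType) d (k : 'rV[R]_d -> 'rV[R]_d -> R) X n (sigma : R) :
  psd_kernel k -> 0 < sigma -> (gram k X n + (sigma ^+ 2)%:M) \in unitmx.
Proof.
move=> [_ kpsd] s0; rewrite unitmxE unitfE; apply/negP => /det0P [v vn0 vA].
have := @quadE R d k X n (sigma ^+ 2) v; rewrite vA mul0mx mxE.
have Q0 := kpsd n (fun i => X i.+1) (fun i => v 0 i).
have S0 : 0 <= \sum_i v 0 i ^+ 2 by apply: sumr_ge0 => i _; exact: sqr_ge0.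
move=> H.
have S00 : \sum_i v 0 i ^+ 2 = 0.
  have s2 : 0 < sigma ^+ 2 by rewrite exprn_gt0.
  apply/eqP; rewrite eq_le S0 andbT.
  rewrite -(@ler_pM2l _ (sigma ^+ 2)) // mulr0; lra.
move/eqP: vn0; apply; apply/matrixP => i j; rewrite (ord1 i) mxE.
move/eqP: S00; rewrite psumr_eq0 => [/allP/(_ j (mem_index_enum _))|]; last first.
  by move=> ? _; exact: sqr_ge0.
by rewrite /= sqrf_eq0 => /eqP.
Qed.
Lemma final_alg (R : realType) (q Q S s2 n : R) : q = Q + s2 * S -> q ^+ 2 <= Q ->
  0 <= Q -> Q <= n * S -> 0 <= S -> 0 < s2 -> 0 <= n -> 0 <= q /\ q * (n + s2) <= n.
Proof.
move=> qE qQ Q0 QS S0 s20 n0.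
have q0 : 0 <= q by rewrite qE; apply: addr_ge0 => //; exact: mulr_ge0 (ltW s20) S0.
split => //.
have H : q * (q * (n + s2)) <= q * n.
  have : s2 * Q <= s2 * (n * S) by rewrite ler_pM2l.
  nra.
have [->|qp] := eqVneq q 0; first by rewrite mul0r.
by rewrite -(@ler_pM2l _ q) // lt_def qp q0.
Qed.

Lemma pair_bound (R : realType) (a b K : R) : -1 <= K -> K <= 1 ->
  a * b * K <= (a ^+ 2 + b ^+ 2) / 2.
Proof.
move=> h1 h2.
have e1 : 0 <= (1 - K) * (a + b) ^+ 2 by apply: mulr_ge0; [lra| exact: sqr_ge0].
have e2 : 0 <= (1 + K) * (a - b) ^+ 2 by apply: mulr_ge0; [lra| exact: sqr_ge0].
have -> : (a ^+ 2 + b ^+ 2) / 2 = a * b * K + ((1 - K) * (a + b) ^+ 2 + (1 + K) * (a - b) ^+ 2) / 4.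
  by field.
rewrite lerDl; apply: divr_ge0; [exact: addr_ge0|lra].
Qed.
Lemma var_bounds (R : realType) d (C : set 'rV[R]_d) k X n (sigma : R) x :
  psd_kernel k -> (forall x x', C x -> C x' -> k x x' <= 1) -> (forall x, C x -> k x x = 1) ->
  (forall i : 'I_n, C (X i.+1)) -> C x -> 0 < sigma ->
  0 <= ((kvec k X n x)^T *m invmx (gram k X n + (sigma ^+ 2)%:M) *m kvec k X n x) 0 0 /\
  ((kvec k X n x)^T *m invmx (gram k X n + (sigma ^+ 2)%:M) *m kvec k X n x) 0 0
     * (n%:R + sigma ^+ 2) <= n%:R.
Proof.
move=> kp kle1 kdiag CX Cx s0.
set q := (_ *m _ *m _) 0 0.
have [ksym kpsd] := kp.
set A := gram k X n + (sigma ^+ 2)%:M.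
set kk := kvec k X n x.
have Au : A \in unitmx := @A_unit R d k X n sigma kp s0.
set w := invmx A *m kk.
have kkE : kk = A *m w by rewrite /w mulKVmx.
have AT : A^T = A.
  rewrite /A raddfD /= tr_scalar_mx; congr (_ + _); apply/matrixP => i j; rewrite !mxE; exact: ksym.
have qE1 : q = (kk^T *m w) 0 0 by rewrite /q /w mulmxA.
have qE2 : q = (w^T *m A *m w^T^T) 0 0 by rewrite qE1 trmxK {1}kkE trmx_mul AT.
have qE3 : q = \sum_(i < n) k (X i.+1) x * w^T 0 i.
  by rewrite qE1 mxE; apply: eq_bigr => i _; rewrite !mxE.
set v := w^T in qE2 qE3.
rewrite /A quadE in qE2.
apply: (@final_alg R q _ _ _ n%:R qE2); last 3 first.
- by apply: sumr_ge0 => i _; exact: sqr_ge0.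
- by rewrite exprn_gt0.
- by rewrite ler0n.
- pose vl := [seq v 0 j | j <- enum 'I_n].
  pose c := fun i : 'I_n.+1 => nth (-q) vl i.
  pose z := fun i : 'I_n.+1 => if (i < n)%N then X i.+1 else x.
  have cw : forall i : 'I_n, c (widen_ord (leqnSn n) i) = v 0 i.
    by move=> i; rewrite /c /vl /= (nth_map i) ?size_enum_ord ?ltn_ord // nth_ord_enum.
  have cm : c ord_max = -q by rewrite /c nth_default // size_map size_enum_ord.
  have zw : forall i : 'I_n, z (widen_ord (leqnSn n) i) = X i.+1.
    by move=> i; rewrite /z /= ltn_ord.
  have zm : z ord_max = x by rewrite /z /= ltnn.
  have := kpsd n.+1 z c.
  rewrite big_ord_recr /=.
  under eq_bigr => i _ do (rewrite big_ord_recr /=; under eq_bigr => j _ do rewrite !cw !zw; rewrite cw zw cm zm).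
  rewrite [X in _ + X]big_ord_recr /=.
  under [X in _ + (X + _)]eq_bigr => j _ do rewrite cw zw cm zm.
  rewrite cm zm kdiag // big_split /=.
  have e1 : \sum_(i < n) v 0 i * - q * k (X i.+1) x = - q * q.
    by rewrite {3}qE3 mulr_sumr; apply: eq_bigr => i _; ring.
  have e2 : \sum_(j < n) - q * v 0 j * k x (X j.+1) = - q * q.
    by rewrite {3}qE3 mulr_sumr; apply: eq_bigr => i _; rewrite (ksym x); ring.
  rewrite e1 e2; nra.
- exact: kpsd.
- apply: (@le_trans _ _ (\sum_(i < n) \sum_(j < n) (v 0 i ^+ 2 / 2 + v 0 j ^+ 2 / 2))).
    apply: ler_sum => i _; apply: ler_sum => j _.
    have := @k_abs_le1 R d C k (X i.+1) (X j.+1) kp kle1 kdiag (CX i) (CX j).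
    rewrite ler_norml => /andP [h1 h2].
    rewrite -mulrDl; exact: pair_bound.
  under eq_bigr do rewrite big_split /= sumr_const card_ord -mulr_suml.
  rewrite big_split /= sumr_const card_ord sumrMnl -mulr_suml.
  set S := \sum_(i < n) _.
  by rewrite -mulrnDl -splitr -[S *+ n]mulr_natr mulrC.
Qed.
Lemma phiF (R : realType) (z : R) : phi z = normal_peak 1 * expR (- z ^+ 2 / 2).
Proof.
rewrite /phi /normal_pdf oner_eq0 /normal_fun subr0 expr1n.
by [].
Qed.
Lemma phi0E (R : realType) : phi (0:R) = normal_peak 1.
Proof. by rewrite phiF expr0n /= oppr0 mul0r expR0 mulr1. Qed.
Lemma phiE (R : realType) (z : R) : phi z = phi 0 * expR (- z ^+ 2 / 2).
Proof. by rewrite phiF phi0E. Qed.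
Lemma phi0_gt0 (R : realType) : 0 < phi (0:R).
Proof. by rewrite phi0E normal_peak_gt0 // oner_eq0. Qed.
Lemma phi0_sq (R : realType) : 2 * pi * phi (0:R) ^+ 2 = 1.
Proof.
rewrite phi0E /normal_peak expr1n mul1r exprVn sqr_sqrtr; last first.
  by rewrite mulrn_wge0 // ltW // pi_gt0.
have p0 := @pi_gt0 R; rewrite -[pi *+ 2]mulr_natl mulfV //; apply: lt0r_neq0; exact: mulr_gt0.
Qed.
Lemma Phi_ge0 (R : realType) (z : R) : 0 <= Phi z.
Proof. by apply: fine_ge0; exact: measure_ge0. Qed.

Lemma Phi_le1 (R : realType) (z : R) : Phi z <= 1.
Proof.
rewrite /Phi.
have h1 : (normal_prob 0 1 `]-oo, z] <= 1)%E.
  by apply: probability_le1; exact: measurable_itv.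
have h0 : (0 <= normal_prob (0:R) 1 `]-oo, z])%E by exact: measure_ge0.
move: h0 h1; case: (normal_prob 0 1 `]-oo, z]) => //= [r|]; by rewrite ?lee_fin.
Qed.
Lemma mean_bounded (R : realType) d (C : set 'rV[R]_d) k X y n (sigma : R) :
  psd_kernel k -> (forall x x', C x -> C x' -> k x x' <= 1) -> (forall x, C x -> k x x = 1) ->
  (forall i : 'I_n, C (X i.+1)) ->
  exists B, forall x, C x -> `|post_mean k sigma X y n x| <= B.
Proof.
move=> kp kle1 kdiag CX.
set w := invmx (gram k X n + (sigma ^+ 2)%:M) *m yvec y n.
exists (\sum_(i < n) `|w i 0|) => x Cx.
rewrite /post_mean -mulmxA -/w mxE.
apply: (le_trans (ler_norm_sum _ _ _)); apply: ler_sum => i _.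
rewrite !mxE normrM ler_piMl //.
exact: (@k_abs_le1 R d C k _ _ kp kle1 kdiag (CX i) Cx).
Qed.
Lemma sd_bounds (R : realType) d (C : set 'rV[R]_d) k X n (sigma : R) x :
  psd_kernel k -> (forall x x', C x -> C x' -> k x x' <= 1) -> (forall x, C x -> k x x = 1) ->
  (forall i : 'I_n, C (X i.+1)) -> C x -> 0 < sigma ->
  0 < Num.sqrt (sigma ^+ 2 / (n%:R + sigma ^+ 2)) /\
  Num.sqrt (sigma ^+ 2 / (n%:R + sigma ^+ 2)) <= post_sd k sigma X n x /\
  post_sd k sigma X n x <= 1.
Proof.
move=> kp kle1 kdiag CX Cx s0.
have [q0 qn] := @var_bounds R d C k X n sigma x kp kle1 kdiag CX Cx s0.
have s2 : 0 < sigma ^+ 2 by rewrite exprn_gt0.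
have ns : 0 < n%:R + sigma ^+ 2 by rewrite ltr_wpDl // ler0n.
have a0 : 0 < sigma ^+ 2 / (n%:R + sigma ^+ 2) by rewrite divr_gt0.
rewrite /post_sd /post_var.
set q := (_ *m _ *m _) 0 0 in q0 qn *.
have h : sigma ^+ 2 / (n%:R + sigma ^+ 2) <= 1 - q.
  rewrite ler_pdivrMr // mulrBl mul1r; move: qn; set P := q * _; lra.
split; first by rewrite sqrtr_gt0.
split.
  rewrite ler_sqrt //; lra.
rewrite -[X in _ <= X]sqrtr1 ler_sqrt //; lra.
Qed.
Lemma EI_lower (R : realType) d (C : set 'rV[R]_d) k X y n (sigma : R) xt :
  psd_kernel k -> (forall x x', C x -> C x' -> k x x' <= 1) -> (forall x, C x -> k x x = 1) ->
  (forall i : 'I_n, C (X i.+1)) -> 0 < sigma -> C xt ->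
  (forall x, C x -> EI k sigma C X y n x <= EI k sigma C X y n xt) ->
  Num.sqrt (sigma ^+ 2 / (n%:R + sigma ^+ 2)) * phi 0 <= EI k sigma C X y n xt.
Proof.
move=> kp kle1 kdiag CX s0 Cxt EImax.
set mu := post_mean k sigma X y n.
set xi := bpmi C mu.
set sq := Num.sqrt _.
have [B hB] := @mean_bounded R d C k X y n sigma kp kle1 kdiag CX.
have hinf : has_inf [set mu x | x in C].
  split; first by exists (mu xt); exists xt.
  exists (- B) => _ [x Cx <-]; have := hB x Cx; rewrite ler_norml => /andP[] //.
have lb : forall x, C x -> xi <= mu x.
  by move=> x Cx; apply: (ge_inf hinf.2); exists x.
have p0 := @phi0_gt0 R.
set Et := EI k sigma C X y n xt.
rewrite leNgt; apply/negP => hlt.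
set D := sq * phi 0 - Et.
have D0 : 0 < D by rewrite /D subr_gt0.
have [sq0 _] := @sd_bounds R d C k X n sigma xt kp kle1 kdiag CX Cxt s0.
set e := Num.min sq (D / (2 * (1 + phi 0))).
have e0 : 0 < e by rewrite lt_min sq0 /= divr_gt0 // mulr_gt0 //; lra.
have [_ [x Cx <-] vlt] := inf_adherent e0 hinf.
have hEI := EImax x Cx; rewrite -/Et /EI /= -/mu -/xi in hEI; move: hEI.
have [_ [sxl sxu]] := @sd_bounds R d C k X n sigma x kp kle1 kdiag CX Cx s0.
set sx := post_sd k sigma X n x in sxl sxu *.
rewrite -/sq in sxl.
set a := mu x - xi.
have a0 : 0 <= a by rewrite subr_ge0 lb.
have ae : a < e by move: vlt; rewrite /a /xi /bpmi; lra.
have ale : a <= sq by apply: (le_trans (ltW ae)); rewrite ge_min lexx.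
have aD : a * (1 + phi 0) < D / 2.
  have : a < D / (2 * (1 + phi 0)) by apply: (lt_le_trans ae); rewrite ge_min lexx orbT.
  rewrite ltr_pdivlMr; last by apply: mulr_gt0 => //; lra.
  move=> h; rewrite ltr_pdivlMr //; lra.
have sxp : 0 < sx by apply: lt_le_trans sxl.
set u := a / sx.
have u0 : 0 <= u by rewrite divr_ge0 // ltW.
have u1 : u <= 1 by rewrite ler_pdivrMr // mul1r; apply: (le_trans ale).
have sxu' : sx * u = a by rewrite /u mulrC divfK // gt_eqF.
have zE : (xi - mu x) / sx = - u by rewrite /u -opprB mulNr.
rewrite zE.
have Phi0 := @Phi_ge0 R (- u); have Phi1 := @Phi_le1 R (- u).
have t1 : - a <= (xi - mu x) * Phi (- u).
  rewrite -/a -opprB mulNr lerN2 ler_piMr //.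
have t2 : sx * (phi 0 * (1 - u ^+ 2 / 2)) <= sx * phi (- u).
  apply: ler_wpM2l; first exact: ltW. rewrite (@phiE R (- u)); apply: ler_wpM2l; first exact: ltW.
  by have := expR_ge1Dx (- (- u) ^+ 2 / 2); rewrite sqrrN mulNr.
have t3 : (sq - a / 2) * phi 0 <= sx * (phi 0 * (1 - u ^+ 2 / 2)).
  have -> : sx * (phi 0 * (1 - u ^+ 2 / 2)) = phi 0 * (sx - a * u / 2).
    by rewrite -sxu'; ring.
  rewrite mulrC ler_pM2l //.
  have : a * u <= a by rewrite ler_piMr.
  lra.
move=> hEI.
have ap : 0 <= a * phi 0 by rewrite mulr_ge0 // ltW.
rewrite /D in aD; lra.
Qed.
Lemma stepC (R : realType) (st z p0 a : R) : 0 < a -> 0 < st -> st <= 1 -> 0 < p0 ->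
  Num.sqrt a * p0 <= st * (p0 * expR (- z ^+ 2 / 2)) ->
  - z * st <= Num.sqrt (ln (a^-1)) * st.
Proof.
move=> a0 st0 st1 p00 h.
set sq := Num.sqrt a.
have sq0 : 0 < sq by rewrite sqrtr_gt0.
set E := expR (- z ^+ 2 / 2).
have E0 : 0 < E by exact: expR_gt0.
have e1 : sq <= E.
  have : st * (p0 * E) <= p0 * E by rewrite ler_piMl // ltW // mulr_gt0.
  move=> h2; have := le_trans h h2; rewrite mulrC ler_pM2l //.
have e2 : ln sq <= - z ^+ 2 / 2.
  by rewrite -[X in _ <= X]expRK ler_ln ?posrE.
have e3 : ln a = ln sq *+ 2 by rewrite -lnXn // sqr_sqrtr // ltW.
have e4 : z ^+ 2 <= ln (a^-1) by rewrite lnV ?posrE // e3 mulr2n; lra.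
have e5 : `|z| <= Num.sqrt (ln (a^-1)).
  by rewrite -sqrtr_sqr ler_sqrt // (le_trans _ e4) // sqr_ge0.
apply: ler_wpM2r; first exact: ltW.
by apply: le_trans e5; rewrite -normrN ler_norm.
Qed.
Theorem mainTheorem5 (R : realType) (d : nat) (r : R) (C : set 'rV[R]_d)
  (k : 'rV[R]_d -> 'rV[R]_d -> R) (f : 'rV[R]_d -> R) (L : R)
  (xstar : 'rV[R]_d) (sigma delta : R)
  (X : nat -> 'rV[R]_d) (eps : nat -> R) (y : nat -> R)
  (t : nat) (Ct : seq 'rV[R]_d) (proj : 'rV[R]_d -> 'rV[R]_d) :
  (1 <= d)%N -> 0 < r ->
  compact C ->
  (forall x, C x -> forall i, 0 <= x ord0 i <= r) ->
  psd_kernel k ->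
  (forall x x', C x -> C x' -> k x x' <= 1) ->
  (forall x, C x -> k x x = 1) ->
  1 / (r * d%:R) <= L ->
  (forall x x', C x -> C x' -> `|f x - f x'| <= L * l1norm (x - x')) ->
  C xstar -> (forall x, C x -> f xstar <= f x) ->
  0 < sigma -> 0 < delta < 1 ->
  (forall i, y i = f (X i) + eps i) ->
  (* GP-EI with BPMI: x_i maximizes EI_{i-1} over C, for i = 1..t *)
  (forall i, (1 <= i <= t)%N ->
     C (X i) /\
     forall x, C x -> EI k sigma C X y i.-1 x <= EI k sigma C X y i.-1 (X i)) ->
  (1 <= t)%N ->
  (* discretization C_t *)
  uniq Ct -> (forall c, c \in Ct -> C c) ->
  (forall x, C x ->
     [/\ proj x \in Ct,
         (forall c, c \in Ct -> l1norm (x - proj x) <= l1norm (x - c)) &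
         l1norm (x - proj x) <= 1 / (L * (t%:R) ^+ 2)]) ->
  (* event E^r(t) *)
  (forall x, x \in Ct ->
     `|f x - post_mean k sigma X y t.-1 x|
       <= Num.sqrt (@beta_t R d L r delta t) * post_sd k sigma X t.-1 x) ->
  `|f (X t) - post_mean k sigma X y t.-1 (X t)|
       <= Num.sqrt (@beta_t R d L r delta t) * post_sd k sigma X t.-1 (X t) ->
  f (X t) - f xstar <=
    (c_mu sigma t + phi 0 + Num.sqrt (@beta_t R d L r delta t))
      * post_sd k sigma X t.-1 (X t)
    + c_alpha * Num.sqrt (@beta_t R d L r delta t) * post_sd k sigma X t.-1 (proj xstar)
    + 1 / (t%:R) ^+ 2.
Proof.
move=> d1 r0 Ccomp Cbox kp kle1 kdiag Lge flip Cxs xsmin s0 dl yE EIh t1 uCt CtC projh Eall Ext.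
have [CXt EImax] := EIh t (andb_true_intro (conj t1 (leqnn t))).
set n := t.-1 in EImax Eall Ext *.
have tn : t = n.+1 by rewrite /n prednK.
have CX : forall i : 'I_n, C (X i.+1).
  move=> i; have [] // := EIh i.+1.
  by rewrite /= tn ltnS ltnW.
have EIl := @EI_lower R d C k X y n sigma (X t) kp kle1 kdiag CX s0 CXt EImax.
set mu := post_mean k sigma X y n in EImax Eall Ext EIl *.
set xi := bpmi C mu.
have [B hB] := @mean_bounded R d C k X y n sigma kp kle1 kdiag CX.
have hinf : has_inf [set mu x | x in C].
  split; first by exists (mu xstar); exists xstar.
  exists (- B) => _ [x Cx <-]; have := hB x Cx; rewrite ler_norml => /andP[] //.
have lb : forall x, C x -> xi <= mu x.
  by move=> x Cx; apply: (ge_inf hinf.2); exists x.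
have [sq0 [stl stu]] := @sd_bounds R d C k X n sigma (X t) kp kle1 kdiag CX CXt s0.
set st := post_sd k sigma X n (X t) in stl stu Ext EIl *.
have st0 : 0 < st by apply: lt_le_trans stl.
set a := sigma ^+ 2 / (n%:R + sigma ^+ 2) in sq0 stl EIl.
have s2 : 0 < sigma ^+ 2 by rewrite exprn_gt0.
have ns : 0 < n%:R + sigma ^+ 2 by rewrite ltr_wpDl // ler0n.
have a0 : 0 < a by rewrite divr_gt0.
set z := (xi - mu (X t)) / st.
have EIu : EI k sigma C X y n (X t) <= st * (phi 0 * expR (- z ^+ 2 / 2)).
  rewrite /EI /= -/mu -/xi -/st -/z -(@phiE R z) gerDr.
  apply: mulr_le0_ge0; last exact: Phi_ge0.
  by rewrite subr_le0 lb.
have hC := @stepC R st z (phi 0) a a0 st0 stu (@phi0_gt0 R) (le_trans EIl EIu).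
have zE : - z * st = mu (X t) - xi by rewrite /z mulNr divfK ?gt_eqF // opprB.
rewrite zE in hC.
have cmuE : c_mu sigma t = Num.sqrt (ln (a^-1)).
  rewrite /c_mu (@phi0_sq R) mul1r /a invf_div; congr (Num.sqrt (ln (_ / _))).
  by rewrite tn mulrSr addrK.
rewrite -cmuE in hC.
set p := proj xstar.
have [pCt _ pdist] := projh xstar Cxs.
have Cp := CtC p pCt.
have hp := Eall p pCt.
have hL := flip xstar p Cxs Cp.
have L0 : 0 < L.
  apply: lt_le_trans Lge; apply: divr_gt0 => //; apply: mulr_gt0 => //.
  by rewrite ltr0n.
have t0 : 0 < (t%:R : R) ^+ 2 by rewrite exprn_gt0 // ltr0n.
have hL2 : L * l1norm (xstar - p) <= 1 / t%:R ^+ 2.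
  apply: (le_trans (ler_wpM2l (ltW L0) pdist)).
  by rewrite mulrA mulr1 invfM mulrA divff ?gt_eqF // mul1r div1r.
have lbp := lb p Cp.
set be := Num.sqrt (beta_t L r delta t) in Ext hp *.
set sp := post_sd k sigma X n p in hp *.
have be0 : 0 <= be by exact: sqrtr_ge0.
have sp0 : 0 <= sp by exact: sqrtr_ge0.
have ca : 1 <= (c_alpha : R) by rewrite /c_alpha ler_pdivlMr ?ltr0n // mul1r ler_nat.
have h1 : be * sp <= c_alpha * be * sp.
  rewrite -mulrA ler_peMl //; exact: mulr_ge0.
have h2 : 0 <= phi 0 * st by rewrite mulr_ge0 // ltW // phi0_gt0.
move: Ext hp hL; rewrite !ler_norml => /andP [e1 e2] /andP [e3 e4] /andP [e5 e6].
rewrite !mulrDl; lra.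
Qed.
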